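(* Let $\alpha,\beta,\gamma\in\mathbb{Z}_2^n$, $p=(p_0,p_1,p_2)\in\mathbb{Z}_2^3$ and $a,b,c\in\mathbb{Z}_2$. If $\mathrm{wt}(p)$ is even, then $$\mathrm{cadp}_c(\alpha p_0,\beta p_1,\gamma p_2)=\frac{1}{2^{\mathrm{wt}(p)}}\sum_{q\in\mathbb{Z}_2^3,\ q\preceq p}\mathrm{cadp}_{c\oplus q_2}(\alpha^{[q_0]},\beta^{[q_1]},\gamma^{[q_2]}),$$ $$\mathrm{padp}_{a,b}(\alpha p_0,\beta p_1,\gamma p_2)=\frac{1}{2^{\mathrm{wt}(p)}}\sum_{q\in\mathbb{Z}_2^3,\ q\preceq p}\mathrm{padp}_{a\oplus q_0,b\oplus q_1}(\alpha^{[q_0]},\beta^{[q_1]},\gamma^{[q_2]}).$$ If $\mathrm{wt}(p)$ is odd, then $\mathrm{cadp}_c(\alpha p_0,\beta p_1,\gamma p_2)=\mathrm{padp}_{a,b}(\alpha p_0,\beta p_1,\gamma p_2)=0$.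
   Context: For $x\in\mathbb{Z}_2^n$ and a bit $t$, $xt=(x_0,\dots,x_{n-1},t)\in\mathbb{Z}_2^{n+1}$. $\overline{x}$ is the bitwise complement and $x^{[a]}=x$ if $a=0$, $\overline{x}$ if $a=1$. $\mathrm{wt}$ is Hamming weight and $q\preceq p$ means $q_i\le p_i$ for all $i$. Indices $0,\dots,7$ are identified with $\mathbb{Z}_2^3$ via $(p_0,p_1,p_2)\leftrightarrow4p_0+2p_1+p_2$; $e_0,\dots,e_7$ are the standard basis row vectors of $\mathbb{Q}^8$. $A_0$ is $\frac14$ times the $8\times8$ matrix with rows $(4,0,0,1,0,1,1,0)$, $(0,0,0,1,0,1,0,0)$, $(0,0,0,1,0,0,1,0)$, $(0,0,0,1,0,0,0,0)$, $(0,0,0,0,0,1,1,0)$, $(0,0,0,0,0,1,0,0)$, $(0,0,0,0,0,0,1,0)$, $(0,\dots,0)$, and $(A_k)_{i,j}=(A_0)_{i\oplus k,j\oplus k}$. For $\alpha,\beta,\gamma\in\mathbb{Z}_2^m$ let $\omega_i=4\alpha_i+2\beta_i+\gamma_i$. With $L_0=(1,0,1,0,1,0,1,0)$, $L_1=(0,1,0,1,0,1,0,1)$, $L_{0,0}=(1,1,0,0,0,0,0,0)$, $L_{0,1}=(0,0,1,1,0,0,0,0)$, $L_{1,0}=(0,0,0,0,1,1,0,0)$, $L_{1,1}=(0,0,0,0,0,0,1,1)$, define $\mathrm{cadp}_c(\alpha,\beta,\gamma)=L_cA_{\omega_0}\cdots A_{\omega_{m-1}}e_0^T$ and $\mathrm{padp}_{a,b}(\alpha,\beta,\gamma)=L_{a,b}A_{\omega_0}\cdots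 A_{\omega_{m-1}}e_0^T$. *)

(* Defs.v *)
From mathcomp Require Import all_boot all_order all_algebra.
Set Implicit Arguments. Unset Strict Implicit. Unset Printing Implicit Defensive.
Import Order.TTheory GRing.Theory Num.Theory.
Local Open Scope ring_scope.

(* Bits of an index i in 0..7 via i = 4 p0 + 2 p1 + p2. *)
Definition bit0 (i : 'I_8) : bool := odd (i %/ 4).
Definition bit1 (i : 'I_8) : bool := odd (i %/ 2).
Definition bit2 (i : 'I_8) : bool := odd i.

Definition idx8 (p0 p1 p2 : bool) : 'I_8 := inord (4 * p0 + 2 * p1 + p2)%N.

Definition xor8 (i k : 'I_8) : 'I_8 :=
  idx8 (bit0 i (+) bit0 k) (bit1 i (+) bit1 k) (bit2 i (+) bit2 k).

Definition A0rows : seq (seq nat) :=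
  [:: [:: 4; 0; 0; 1; 0; 1; 1; 0]%N;
      [:: 0; 0; 0; 1; 0; 1; 0; 0]%N;
      [:: 0; 0; 0; 1; 0; 0; 1; 0]%N;
      [:: 0; 0; 0; 1; 0; 0; 0; 0]%N;
      [:: 0; 0; 0; 0; 0; 1; 1; 0]%N;
      [:: 0; 0; 0; 0; 0; 1; 0; 0]%N;
      [:: 0; 0; 0; 0; 0; 0; 1; 0]%N;
      [:: 0; 0; 0; 0; 0; 0; 0; 0]%N].

Definition A0 : 'M[rat]_8 :=
  \matrix_(i < 8, j < 8) ((nth 0%N (nth [::] A0rows i) j)%:R / 4).

Definition Amat (k : 'I_8) : 'M[rat]_8 :=
  \matrix_(i < 8, j < 8) A0 (xor8 i k) (xor8 j k).

Definition omega m (al be ga : m.-tuple bool) (i : 'I_m) : 'I_8 :=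
  idx8 (tnth al i) (tnth be i) (tnth ga i).

Definition prodA m (al be ga : m.-tuple bool) : 'M[rat]_8 :=
  \prod_(i < m) Amat (omega al be ga i).

Definition e0 : 'rV[rat]_8 := \row_(j < 8) (j == 0 :> nat)%:R.

Definition Lc (c : bool) : 'rV[rat]_8 := \row_(j < 8) (bit2 j == c)%:R.
Definition Lab (a b : bool) : 'rV[rat]_8 :=
  \row_(j < 8) ((bit0 j == a) && (bit1 j == b))%:R.

Definition cadp (c : bool) m (al be ga : m.-tuple bool) : rat :=
  (Lc c *m prodA al be ga *m e0^T) 0 0.
Definition padp (a b : bool) m (al be ga : m.-tuple bool) : rat :=
  (Lab a b *m prodA al be ga *m e0^T) 0 0.

Definition cpl n (x : n.-tuple bool) (a : bool) : n.-tuple bool :=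
  if a then map_tuple negb x else x.

Definition app n (x : n.-tuple bool) (t : bool) : n.+1.-tuple bool :=
  rcons_tuple x t.

Definition wt3 (p0 p1 p2 : bool) : nat := (p0 + p1 + p2)%N.

(* Main.v *)
Require Import Defs.
From mathcomp Require Import all_boot all_order all_algebra.
From mathcomp Require Import ring.
Import Order.TTheory GRing.Theory Num.Theory.
Local Open Scope ring_scope.

Lemma idx8E (a b c : bool) : nat_of_ord (idx8 a b c) = (4 * a + 2 * b + c)%N.
Proof. by rewrite /idx8 inordK //; case: a; case: b; case: c. Qed.

Lemma bit0_idx a b c : bit0 (idx8 a b c) = a.
Proof. by rewrite /bit0 idx8E; case: a; case: b; case: c. Qed.
Lemma bit1_idx a b c : bit1 (idx8 a b c) = b.
Proof. by rewrite /bit1 idx8E; case: a; case: b; case: c. Qed.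
Lemma bit2_idx a b c : bit2 (idx8 a b c) = c.
Proof. by rewrite /bit2 idx8E; case: a; case: b; case: c. Qed.

Lemma idx_bits (i : 'I_8) : i = idx8 (bit0 i) (bit1 i) (bit2 i).
Proof.
apply: val_inj; rewrite /= idx8E.
by case: i => [[|[|[|[|[|[|[|[|//]]]]]]]] Hi].
Qed.

Lemma xor_idx a b c x y z :
  xor8 (idx8 a b c) (idx8 x y z) = idx8 (a (+) x) (b (+) y) (c (+) z).
Proof. by rewrite /xor8 !bit0_idx !bit1_idx !bit2_idx. Qed.

Lemma xorK (i k : 'I_8) : xor8 (xor8 i k) k = i.
Proof.
rewrite [i]idx_bits [k]idx_bits !xor_idx -!addbA !addbb !addbF //.
Qed.

Lemma xorA (i k w : 'I_8) : xor8 (xor8 i k) w = xor8 i (xor8 w k).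
Proof.
rewrite [i]idx_bits [k]idx_bits [w]idx_bits !xor_idx.
by rewrite -!addbA [bit0 k (+) _]addbC [bit1 k (+) _]addbC [bit2 k (+) _]addbC.
Qed.

Lemma ord0_idx : (ord0 : 'I_8) = idx8 false false false.
Proof. by apply: val_inj; rewrite /= idx8E. Qed.

Lemma xor0 (k : 'I_8) : xor8 ord0 k = k.
Proof. by rewrite ord0_idx [k]idx_bits xor_idx. Qed.

Definition P (k : 'I_8) : 'M[rat]_8 := \matrix_(i, j) (xor8 i k == j)%:R.

Lemma mulPM m (k : 'I_8) (B : 'M[rat]_(8, m)) i j : (P k *m B) i j = B (xor8 i k) j.
Proof.
rewrite mxE (bigD1 (xor8 i k)) //= mxE eqxx mul1r big1 ?addr0 // => l ne.
by rewrite mxE eq_sym (negbTE ne) mul0r.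
Qed.

Lemma mulMP m (k : 'I_8) (B : 'M[rat]_(m, 8)) i j : (B *m P k) i j = B i (xor8 j k).
Proof.
rewrite mxE (bigD1 (xor8 j k)) //= mxE xorK eqxx mulr1 big1 ?addr0 // => l ne.
rewrite mxE; case: eqP => [E|]; last by rewrite mulr0.
by case/eqP: ne; rewrite -E xorK.
Qed.

Lemma PP k : P k *m P k = 1%:M.
Proof. by apply/matrixP => i j; rewrite mulPM !mxE xorK. Qed.

Lemma Amat_xor w k : Amat (xor8 w k) = P k *m Amat w *m P k.
Proof. by apply/matrixP => i j; rewrite mulMP mulPM !mxE !xorA. Qed.

Lemma tnth_cpl n (x : n.-tuple bool) q i : tnth (cpl x q) i = tnth x i (+) q.
Proof. by case: q; rewrite /cpl ?tnth_map ?addbT ?addbF. Qed.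

Lemma omega_cpl n (al be ga : n.-tuple bool) q0 q1 q2 i :
  omega (cpl al q0) (cpl be q1) (cpl ga q2) i = xor8 (omega al be ga i) (idx8 q0 q1 q2).
Proof. by rewrite /omega !tnth_cpl xor_idx. Qed.

Lemma prodA_cpl n (al be ga : n.-tuple bool) q0 q1 q2 :
  prodA (cpl al q0) (cpl be q1) (cpl ga q2) =
  P (idx8 q0 q1 q2) *m prodA al be ga *m P (idx8 q0 q1 q2).
Proof.
rewrite /prodA; set k := idx8 q0 q1 q2.
apply: (big_rec2 (fun x y => x = P k *m y *m P k)).
  by rewrite -idmxE mulmx1 PP.
move=> i y1 y2 _ ->; rewrite omega_cpl Amat_xor -!mulmxE.
by rewrite !mulmxA -[P k *m _ *m P k *m P k]mulmxA PP mulmx1.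
Qed.

Lemma tnth_app n (x : n.-tuple bool) t (j : 'I_n.+1) :
  tnth (app x t) j = if (j < n)%N then nth false x j else t.
Proof.
rewrite (tnth_nth false) /= nth_rcons size_tuple.
case: ltnP => // H; have -> : nat_of_ord j = n by apply/eqP; rewrite eqn_leq H -ltnS ltn_ord.
by rewrite eqxx.
Qed.

Lemma prodA_app n (al be ga : n.-tuple bool) p0 p1 p2 :
  prodA (app al p0) (app be p1) (app ga p2) =
  prodA al be ga *m Amat (idx8 p0 p1 p2).
Proof.
rewrite /prodA big_ord_recr /= mulmxE; congr (_ * _).
  apply: eq_bigr => i _; rewrite /omega !tnth_app /= ltn_ord.
  by rewrite -!(tnth_nth false).
by rewrite /omega !tnth_app /= ltnn.
Qed.

Lemma e0E (M : 'rV[rat]_8) : (M *m e0^T) 0 0 = M 0 ord0.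
Proof.
rewrite mxE (bigD1 ord0) //= !mxE /= mulr1 big1 ?addr0 // => l ne.
rewrite !mxE; case: l ne => [[|m] Hm] //= _; by rewrite mulr0.
Qed.

Lemma sumE (M : 'rV[rat]_8) B : (M *m B *m e0^T) 0 0 = \sum_j M 0 j * B j ord0.
Proof. by rewrite e0E mxE. Qed.

Lemma Pe0 (M : 'rV[rat]_8) k : (M *m P k *m e0^T) 0 0 = M 0 k.
Proof. by rewrite e0E mulMP xor0. Qed.

Lemma LcP c q0 q1 q2 : Lc (c (+) q2) *m P (idx8 q0 q1 q2) = Lc c.
Proof.
apply/rowP => j; rewrite mulMP !mxE [j]idx_bits xor_idx !bit2_idx.
by case: (bit2 j); case: c; case: q2.
Qed.

Lemma LabP a b q0 q1 q2 : Lab (a (+) q0) (b (+) q1) *m P (idx8 q0 q1 q2) = Lab a b.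
Proof.
apply/rowP => j; rewrite mulMP !mxE [j]idx_bits xor_idx !bit0_idx !bit1_idx.
by case: (bit0 j); case: (bit1 j); case: a; case: b; case: q0; case: q1.
Qed.

Lemma cadp_cpl n (al be ga : n.-tuple bool) c q0 q1 q2 :
  cadp (c (+) q2) (cpl al q0) (cpl be q1) (cpl ga q2) =
  (Lc c *m prodA al be ga) 0 (idx8 q0 q1 q2).
Proof. by rewrite /cadp prodA_cpl !mulmxA LcP Pe0. Qed.

Lemma padp_cpl n (al be ga : n.-tuple bool) a b q0 q1 q2 :
  padp (a (+) q0) (b (+) q1) (cpl al q0) (cpl be q1) (cpl ga q2) =
  (Lab a b *m prodA al be ga) 0 (idx8 q0 q1 q2).
Proof. by rewrite /padp prodA_cpl !mulmxA LabP Pe0. Qed.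

Lemma cadp_app n (al be ga : n.-tuple bool) c p0 p1 p2 :
  cadp c (app al p0) (app be p1) (app ga p2) =
  \sum_j (Lc c *m prodA al be ga) 0 j * Amat (idx8 p0 p1 p2) j ord0.
Proof. by rewrite /cadp prodA_app mulmxA sumE. Qed.

Lemma padp_app n (al be ga : n.-tuple bool) a b p0 p1 p2 :
  padp a b (app al p0) (app be p1) (app ga p2) =
  \sum_j (Lab a b *m prodA al be ga) 0 j * Amat (idx8 p0 p1 p2) j ord0.
Proof. by rewrite /padp prodA_app mulmxA sumE. Qed.

Definition colv (p0 p1 p2 b0 b1 b2 : bool) : nat :=
  nth 0%N (nth [::] A0rows (Nat.add (Nat.add (Nat.mul 4 (b0 (+) p0)) (Nat.mul 2 (b1 (+) p1))) (b2 (+) p2)))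
     (Nat.add (Nat.add (Nat.mul 4 p0) (Nat.mul 2 p1)) p2).

Lemma colA p0 p1 p2 b0 b1 b2 :
  Amat (idx8 p0 p1 p2) (idx8 b0 b1 b2) ord0 = (colv p0 p1 p2 b0 b1 b2)%:R / 4.
Proof. by rewrite !mxE xor0 xor_idx !idx8E. Qed.

Lemma sum8 (F : 'I_8 -> rat) : \sum_j F j =
  F (idx8 false false false) + (F (idx8 false false true) + (F (idx8 false true false) +
  (F (idx8 false true true) + (F (idx8 true false false) + (F (idx8 true false true) +
  (F (idx8 true true false) + (F (idx8 true true true) + 0))))))).
Proof.
rewrite !big_ord_recl big_ord0.
by congr (F _ + (F _ + (F _ + (F _ + (F _ + (F _ + (F _ + (F _ + 0)))))))); apply: val_inj => /=; rewrite idx8E.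
Qed.

Lemma sumb (F : bool -> rat) p : \sum_(q | q ==> p) F q = F false + (if p then F true else 0).
Proof. by rewrite big_mkcond big_bool /=; case: p => //=; rewrite addrC. Qed.

Lemma key (N : 'rV[rat]_8) p0 p1 p2 :
  (~~ odd (wt3 p0 p1 p2) ->
   \sum_j N 0 j * Amat (idx8 p0 p1 p2) j ord0 =
   1 / (2 ^ wt3 p0 p1 p2)%:R *
      \sum_(q0 : bool | q0 ==> p0) \sum_(q1 : bool | q1 ==> p1)
        \sum_(q2 : bool | q2 ==> p2) N 0 (idx8 q0 q1 q2))
  /\ (odd (wt3 p0 p1 p2) -> \sum_j N 0 j * Amat (idx8 p0 p1 p2) j ord0 = 0).
Proof.
rewrite !sumb sum8 !colA.
case: p0; case: p1; case: p2; rewrite /colv /wt3 /=; split => // _.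
all: field.
all: by [].
Qed.

Theorem theorem3 (n : nat) (al be ga : n.-tuple bool) (p0 p1 p2 a b c : bool) :
  (~~ odd (wt3 p0 p1 p2) ->
    cadp c (app al p0) (app be p1) (app ga p2) =
      1 / (2 ^ wt3 p0 p1 p2)%:R *
      \sum_(q0 : bool | q0 ==> p0) \sum_(q1 : bool | q1 ==> p1)
        \sum_(q2 : bool | q2 ==> p2)
          cadp (c (+) q2) (cpl al q0) (cpl be q1) (cpl ga q2)
    /\
    padp a b (app al p0) (app be p1) (app ga p2) =
      1 / (2 ^ wt3 p0 p1 p2)%:R *
      \sum_(q0 : bool | q0 ==> p0) \sum_(q1 : bool | q1 ==> p1)
        \sum_(q2 : bool | q2 ==> p2)
          padp (a (+) q0) (b (+) q1) (cpl al q0) (cpl be q1) (cpl ga q2))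
  /\
  (odd (wt3 p0 p1 p2) ->
    cadp c (app al p0) (app be p1) (app ga p2) = 0 /\
    padp a b (app al p0) (app be p1) (app ga p2) = 0).
Proof.
rewrite cadp_app padp_app.
have [Hc1 Hc2] := key (Lc c *m prodA al be ga) p0 p1 p2.
have [Hp1 Hp2] := key (Lab a b *m prodA al be ga) p0 p1 p2.
split => H; last by rewrite Hc2 // Hp2.
split; [rewrite Hc1 // | rewrite Hp1 //]; congr (_ * _);
  apply: eq_bigr => q0 _; apply: eq_bigr => q1 _; apply: eq_bigr => q2 _.
  by rewrite cadp_cpl.
by rewrite padp_cpl.
Qed.
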